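(* Let $G$ be a finite graph and $\ell$ a $\mathbb{Z}_2^2$-cordial labeling of $G$. Then for every bijection $\varphi:\mathbb{Z}_2^2\to\mathbb{Z}_2^2$ with $\varphi(0)=0$, the labeling $\varphi\circ\ell$ is also a $\mathbb{Z}_2^2$-cordial labeling of $G$.
   Context: $\mathbb{Z}_2^2=\mathbb{Z}_2\times\mathbb{Z}_2$ is the Klein four-group. For an abelian group $A$ and a graph $G=(V,E)$, a vertex labeling $\ell:V\to A$ induces an edge labeling $\ell(\{v_1,v_2\})=\ell(v_1)+\ell(v_2)$. Let $f_V(a)=|\{v\in V:\ell(v)=a\}|$ and $f_E(a)=|\{e\in E:\ell(e)=a\}|$. The labeling is $A$-cordial if $|f_V(a_1)-f_V(a_2)|\le 1$ and $|f_E(a_1)-f_E(a_2)|\le 1$ for all $a_1,a_2\in A$. *)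

(* Defs.v *)
From mathcomp Require Import all_boot all_order all_algebra.
Set Implicit Arguments. Unset Strict Implicit. Unset Printing Implicit Defensive.
Import GRing.Theory.
Local Open Scope ring_scope.

Notation K4 := ('Z_2 * 'Z_2)%type.

Definition simple_graph (V : finType) (adj : rel V) : Prop :=
  symmetric adj /\ irreflexive adj.

Definition edges (V : finType) (adj : rel V) : {set {set V}} :=
  [set E : {set V} | [exists u, exists v, adj u v && (E == [set u; v])]].

(* Induced edge label: l({v1,v2}) = l v1 + l v2 (well defined, since the
   sum is commutative; for E = [set u; v] we take any u, v with E = {u,v}). *)
Definition edge_label (V : finType) (A : zmodType) (l : V -> A) (E : {set V}) : A :=
  \sum_(x in E) l x.

Definition fV (V : finType) (A : zmodType) (l : V -> A) (a : A) : nat :=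
  #|[set v : V | l v == a]|.

Definition fE (V : finType) (adj : rel V) (A : zmodType) (l : V -> A) (a : A) : nat :=
  #|[set E in edges adj | edge_label l E == a]|.

Definition close (m n : nat) : bool := (m <= n.+1)%N && (n <= m.+1)%N.

Definition cordial (V : finType) (adj : rel V) (A : zmodType) (l : V -> A) : Prop :=
  forall a1 a2 : A, close (fV l a1) (fV l a2) && close (fE adj l a1) (fE adj l a2).

(* Main.v *)
Require Import Defs.
From mathcomp Require Import all_boot all_order all_algebra.
Import GRing.Theory.

Lemma zc (x : 'Z_2) : x = 0%R \/ x = 1%R.
Proof. case: x => [[|[|n]] H]; [left|right|]; try exact: val_inj. by []. Qed.
Lemma k4_third : [forall x : K4, forall y : K4, forall z : K4,
  [&& x != 0%R, y != 0%R, z != 0%R, x != y, y != z & x != z] ==> (z == x + y)%R].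
Proof.
apply/forallP => -[x1 x2]; apply/forallP => -[y1 y2]; apply/forallP => -[z1 z2].
by case: (zc x1) => ->; case: (zc x2) => ->; case: (zc y1) => ->; case: (zc y2) => ->;
 case: (zc z1) => ->; case: (zc z2) => ->.
Qed.
Lemma k4_dbl : [forall x : K4, x + x == 0]%R.
Proof. apply/forallP => -[x1 x2]. by case: (zc x1) => ->; case: (zc x2) => ->. Qed.

Lemma phi_add (phi : K4 -> K4) : injective phi -> phi 0%R = 0%R ->
  forall a b, phi (a + b)%R = (phi a + phi b)%R.
Proof.
move=> inj p0 a b.
have dbl x : (x + x = 0 :> K4)%R by apply/eqP; move/forallP: k4_dbl; apply.
case: (eqVneq a 0%R) => [->|a0]; first by rewrite p0 !add0r.
case: (eqVneq b 0%R) => [->|b0]; first by rewrite p0 !addr0.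
case: (eqVneq a b) => [->|ab]; first by rewrite !dbl p0.
have ne x y : x != y -> phi x != phi y by move=> nxy; apply: contra nxy => /eqP/inj ->.
have c0 : (a + b != 0)%R.
  apply: contra ab => /eqP h; apply/eqP; by rewrite -[b]add0r -h -addrA dbl addr0.
have ca : (a != a + b)%R.
  apply: contra b0 => /eqP h; apply/eqP; by rewrite -[b]add0r -(dbl a) -addrA -h.
have cb : (b != a + b)%R.
  apply: contra a0 => /eqP h; apply/eqP; by rewrite -[a]addr0 -(dbl b) addrA -h.
have := k4_third; move/forallP/(_ (phi a))/forallP/(_ (phi b))/forallP/(_ (phi (a+b)%R)).
move/implyP => h; apply/eqP/h.
have n0 x : x != 0%R -> phi x != 0%R by move/ne; rewrite p0.
by rewrite (n0 _ a0) (n0 _ b0) (n0 _ c0) (ne _ _ ab) (ne _ _ ca) (ne _ _ cb).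
Qed.

Theorem lemma4p2 (V : finType) (adj : rel V) (l : V -> K4) (phi : K4 -> K4) :
  simple_graph adj ->
  cordial adj l ->
  bijective phi ->
  phi 0%R = 0%R ->
  cordial adj (phi \o l).
Proof.
move=> _ H [g pg gp] p0 a1 a2.
have inj := can_inj pg.
have pD := @phi_add phi inj p0.
have eV a : fV (phi \o l) a = fV l (g a).
  by rewrite /fV; apply: eq_card => v; rewrite !inE /= (can2_eq pg gp).
have eE a : fE adj (phi \o l) a = fE adj l (g a).
  rewrite /fE; apply: eq_card => E; rewrite !inE /edge_label.
  rewrite -(big_morph phi pD p0) (can2_eq pg gp) //.
by rewrite !eV !eE; apply: H.
Qed.
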